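(* Let $\varphi$ be a 3SAT formula on variables $x_1,\dots,x_n$ in which every clause consists of exactly three literals on three distinct variables, and let $(X,\mathcal{F})$ be the game hypergraph constructed from $\varphi$ as described in the context. Then, in the strict Avoider-Enforcer game on $(X,\mathcal{F})$ in which Enforcer makes the first move, Avoider has a winning strategy if and only if $\varphi$ is satisfiable. (Note that $|X|=4n$ and every losing set has at most six elements.)
   Context: A (strict) Avoider-Enforcer game is given by a finite set $X$ (the board) and a family $\mathcal{F}$ of subsets of $X$ (the losing sets). Two players, Avoider and Enforcer, alternately claim one previously unclaimed element of $X$ per move until all elements of $X$ are claimed. Enforcer wins if Avoider has claimed all elements of some losing set $f\in\mathcal{F}$; otherwise Avoider wins. Construction from a 3SAT formula $\varphi$ on variables $x_1,\dots,x_n$ (each clause having exactly three literals on three distinct variables): the board is $X=\bigcup_{i=1}^n\{a_i,s_i,x_i,\overline{x_i}\}$, consisting of $4n$ distinct vertices; the set $B_i=\{a_i,s_i,x_i,\overline{x_i}\}$ is called box $i$. The vertices $x_i,\overline{x_i}$ are identified with the literals $x_i,\overline{x_i}$ of $\varphi$. The family $\mathcal{F}$ consists of (1) for each $i$, all four 3-element subsets of $B_i$; and (2) for each clause $C=\ell_i\lor\ell_j\lor\ell_k$ of $\varphi$, where $\ell_h\in\{x_h,\overline{x_h}\}$ for $h=i,j,k$, the set $L_C=\{s_i,s_j,s_k,\overline{\ell_i},\overline{\ell_j},\overline{\ell_k}\}$, where $\overline{\ell}$ denotes the negation of literal $\ell$ (with $\overline{\overline{x_h}}=x_h$). *)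

(* Defs.v *)
From mathcomp Require Import all_boot.
Set Implicit Arguments. Unset Strict Implicit. Unset Printing Implicit Defensive.

Section Game.
Variable X : finType.
Variable F : {set {set X}}.

(* This is the usual backward-induction (alternating quantifier) characterization
   of the existence of a winning strategy in a finite perfect-information game. *)
Fixpoint avoider_wins_from (k : nat) (A E : {set X}) (enf_turn : bool) : bool :=
  match k with
  | 0 => ~~ [exists f in F, f \subset A]
  | k'.+1 =>
      if enf_turn then
        [forall x in ~: (A :|: E), avoider_wins_from k' A (x |: E) false]
      else
        [exists x in ~: (A :|: E), avoider_wins_from k' (x |: A) E true]
  end.

Definition avoider_wins_enforcer_first : bool :=
  avoider_wins_from #|X| set0 set0 true.
End Game.

(* A literal on variables x_0..x_{n-1}: (i, true) is x_i, (i, false) is ~x_i. *)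
Definition literal (n : nat) := ('I_n * bool)%type.
Definition lit_neg n (l : literal n) : literal n := (l.1, ~~ l.2).

Definition clause (n : nat) := (3.-tuple (literal n))%type.
Definition clause_ok n (C : clause n) : bool := uniq (map fst C).

Definition lit_true n (v : 'I_n -> bool) (l : literal n) : bool := v l.1 == l.2.
Definition satisfiable n (phi : seq (clause n)) : Prop :=
  exists v : 'I_n -> bool, all (fun C : clause n => has (lit_true v) C) phi.

(* vertex (i, k): k = 0 -> a_i, 1 -> s_i, 2 -> x_i, 3 -> ~x_i *)
Definition board (n : nat) := ('I_n * 'I_4)%type.
Definition ord4_0 : 'I_4 := @Ordinal 4 0 isT.
Definition ord4_1 : 'I_4 := @Ordinal 4 1 isT.
Definition ord4_2 : 'I_4 := @Ordinal 4 2 isT.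
Definition ord4_3 : 'I_4 := @Ordinal 4 3 isT.
Definition vtx_a n (i : 'I_n) : board n := (i, ord4_0).
Definition vtx_s n (i : 'I_n) : board n := (i, ord4_1).
Definition vtx_lit n (l : literal n) : board n := (l.1, if l.2 then ord4_2 else ord4_3).

Definition box n (i : 'I_n) : {set board n} :=
  [set vtx_a i; vtx_s i; vtx_lit (i, true); vtx_lit (i, false)].

Definition clause_set n (C : clause n) : {set board n} :=
  [set vtx_s l.1 | l in C] :|: [set vtx_lit (lit_neg l) | l in C].

Definition game_family n (phi : seq (clause n)) : {set {set board n}} :=
  [set S : {set board n} | [exists i : 'I_n, (S \subset box i) && (#|S| == 3)]]
  :|: [set clause_set C | C in phi].

(* Main.v *)
Require Import Defs.
From mathcomp Require Import all_boot zify.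
Set Implicit Arguments. Unset Strict Implicit. Unset Printing Implicit Defensive.

Section Generic.
Variable X : finType.
Variable F : {set {set X}}.

Lemma free_addE (A E : {set X}) x :
  ~: (A :|: (x |: E)) = ~: (A :|: E) :\ x.
Proof. by apply/setP=> p; rewrite !inE; case: (p == x); rewrite ?andbF ?andbT //= orbT. Qed.

Lemma free_addA (A E : {set X}) x :
  ~: ((x |: A) :|: E) = ~: (A :|: E) :\ x.
Proof. by apply/setP=> p; rewrite !inE; case: (p == x). Qed.

Lemma card_free_add (S : {set X}) x k : x \in S -> #|S| = k.+1 -> #|S :\ x| = k.
Proof. by move=> Hx; rewrite (cardsD1 x S) Hx add1n => -[]. Qed.

Lemma complete k : forall (A E : {set X}) t,
  (forall p, p \in A -> p \notin E) -> #|~: (A :|: E)| = k ->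
  avoider_wins_from F k A E t ->
  exists A' : {set X}, A \subset A' /\ (forall p, p \in A' -> p \notin E) /\
     #|A'| = #|A| + (if t then k./2 else uphalf k) /\
     ~~ [exists f in F, f \subset A'].
Proof.
elim: k => [|k IH] A E t Hd Hk /=.
  move=> H; exists A; split=> //; split=> //; split=> //; by case: t; rewrite addn0.
have : 0 < #|~: (A :|: E)| by rewrite Hk.
rewrite card_gt0 => /set0Pn [x Hx].
have Hx' := Hx; rewrite !inE negb_or in Hx'; case/andP: Hx' => HxA HxE.
case: t.
  move/forallP/(_ x); rewrite Hx /= => Hw.
  have [||A' [H1 [H2 [H3 H4]]]] := IH A (x |: E) false _ _ Hw.
  - move=> p Hp; rewrite !inE negb_or (Hd p Hp) andbT.
    by apply/eqP=> Ep; move: Hp; rewrite Ep (negbTE HxA).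
  - by rewrite free_addE; apply: card_free_add.
  exists A'; split=> //; split.
    by move=> p /H2; rewrite !inE negb_or => /andP[].
  by split.
case/existsP=> y /andP [Hy Hw].
have Hy' := Hy; rewrite !inE negb_or in Hy'; case/andP: Hy' => HyA HyE.
have [||A' [H1 [H2 [H3 H4]]]] := IH (y |: A) E true _ _ Hw.
- move=> p; rewrite !inE => /orP [/eqP -> //|]; exact: Hd.
- by rewrite free_addA; apply: card_free_add.
exists A'; split; first by apply: subset_trans H1; apply: subsetUr.
split=> //; split=> //.
rewrite H3 cardsU1 HyA /=. lia.
Qed.

End Generic.

Definition code (c : bool) : 'I_4 := if c then ord4_2 else ord4_3.

Lemma ord4_cases (k : 'I_4) : [\/ k = ord4_0, k = ord4_1, k = ord4_2 | k = ord4_3].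
Proof.
case: k => [[|[|[|[|k]]]] Hk] //.
- by constructor 1; apply: val_inj.
- by constructor 2; apply: val_inj.
- by constructor 3; apply: val_inj.
- by constructor 4; apply: val_inj.
Qed.

Lemma three_in (T : finType) (S : {set T}) a b c :
  uniq [:: a; b; c] -> a \in S -> b \in S -> c \in S -> 3 <= #|S|.
Proof.
move=> Hu Ha Hb Hc; rewrite cardE.
apply: (uniq_leq_size (s1 := [:: a; b; c])) => // x.
by rewrite !inE mem_enum => /or3P [] /eqP ->.
Qed.

Lemma three_subset (T : finType) (S : {set T}) :
  3 <= #|S| -> exists S' : {set T}, S' \subset S /\ #|S'| = 3.
Proof.
move=> H3; exists [set x in take 3 (enum S)]; split.
  by apply/subsetP=> x; rewrite inE => /mem_take; rewrite mem_enum.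
rewrite cardsE; apply/eqP; rewrite (card_uniqP _) ?take_uniq ?enum_uniq //.
by rewrite size_takel // -cardE.
Qed.

Lemma arith1 a e a' k n (t : bool) : a + e + k = n * 4 -> e = a + ~~ t ->
  a' = a + (if t then k./2 else uphalf k) -> a' = n.*2.
Proof. by case: t => /=; lia. Qed.

Section Board.
Variable n : nat.
Variable phi : seq (clause n).
Local Notation FF := (game_family phi).
Local Notation win := (avoider_wins_from FF).

Lemma boxE (i : 'I_n) : box i = [set p : board n | p.1 == i].
Proof.
apply/setP=> [[j k]]; rewrite !inE /vtx_a /vtx_s /vtx_lit /= !xpair_eqE.
case: (j == i) => //=.
by case: (ord4_cases k) => ->.
Qed.

Lemma card_box (i : 'I_n) : #|box i| = 4.
Proof.
rewrite boxE (_ : [set p : board n | p.1 == i] = [set (i, k) | k in 'I_4]).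
  by rewrite card_imset ?card_ord // => x y [].
apply/setP=> [[j k]]; rewrite !inE /=; apply/idP/imsetP => [/eqP -> | [k' _ [-> _]]] //.
by exists k.
Qed.

Lemma card_board : #|{: board n}| = n * 4.
Proof. by rewrite card_prod !card_ord. Qed.

Lemma card_sum_boxes (S : {set board n}) : #|S| = \sum_(i < n) #|S :&: box i|.
Proof.
rewrite -sum1_card (partition_big (fun p : board n => p.1) xpredT) //=.
apply: eq_bigr => i _; rewrite -sum1_card; apply: eq_bigl => p.
by rewrite boxE !inE.
Qed.

Definition Inv k (A E : {set board n}) (t : bool) :=
  [/\ (forall p, p \in A -> p \notin E), #|~: (A :|: E)| = k & #|E| = #|A| + ~~ t].

Lemma Inv_tot k A E t : Inv k A E t -> #|A| + #|E| + k = n * 4.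
Proof.
case=> Hd Hk _; rewrite -card_board -Hk -(cardsC (A :|: E)) cardsU.
have -> : A :&: E = set0.
  by apply/setP=> p; rewrite !inE; apply/negP=> /andP [/Hd /negP].
by rewrite cards0 subn0.
Qed.

Lemma lose_E3 k (A E : {set board n}) t i :
  Inv k A E t -> 3 <= #|E :&: box i| -> win k A E t -> False.
Proof.
move=> HI H3 Hw; have Htot := Inv_tot HI; case: HI => Hd Hk HE.
have [A' [H1 [H2 [H3' H4]]]] := complete Hd Hk Hw.
  have HA' : #|A'| = n.*2.
    by apply: (arith1 Htot HE H3').
have Hi : #|A' :&: box i| <= 1.
  have : #|(A' :&: box i) :|: (E :&: box i)| <= 4.
    rewrite -[X in _ <= X](card_box i); apply: subset_leq_card.
    by rewrite subUset !subsetIr.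
  rewrite cardsU (_ : (A' :&: box i) :&: (E :&: box i) = set0) ?cards0 ?subn0; first by lia.
  apply/eqP; rewrite -subset0; apply/subsetP=> p; rewrite !in_setI.
  by case/andP=> /andP [Hp _] /andP [Hq _]; move: (H2 p Hp); rewrite Hq.
have [j Hj] : exists j, 2 < #|A' :&: box j|.
  case: (pickP (fun j => 2 < #|A' :&: box j|)) => [j Hj|Hno]; first by exists j.
  exfalso.
  have : \sum_(j < n) #|A' :&: box j| < \sum_(j < n) 2.
    rewrite (bigD1 i) // [X in _ < X](bigD1 i) //=.
    rewrite -addSn; apply: leq_add; first by rewrite ltnS.
    by apply: leq_sum => j _; move/negbT: (Hno j); rewrite -leqNgt.
  by rewrite -card_sum_boxes sum_nat_const card_ord HA'; lia.
have [S [HS1 HS2]] := three_subset Hj.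
case/negP: H4; apply/existsP; exists S; apply/andP; split.
  rewrite /game_family !inE; apply/orP; left; apply/existsP; exists j.
  by rewrite HS2 eqxx andbT; apply: subset_trans HS1 (subsetIr _ _).
by apply: subset_trans HS1 (subset_trans (subsetIl _ _) _).
Qed.

End Board.

Definition pk (c : bool) (k : 'I_4) : 'I_4 :=
  if c then match val k with 0 => ord4_2 | 1 => ord4_3 | 2 => ord4_0 | _ => ord4_1 end
  else match val k with 0 => ord4_3 | 1 => ord4_2 | 2 => ord4_1 | _ => ord4_0 end.

Section Pair.
Variable n : nat.
Variable phi : seq (clause n).
Local Notation FF := (game_family phi).
Local Notation win := (avoider_wins_from FF).
Variable v : 'I_n -> bool.
Hypothesis Hv : all (fun C : clause n => has (lit_true v) C) phi.

Definition partner (p : board n) : board n := (p.1, pk (v p.1) p.2).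

Lemma partnerK p : partner (partner p) = p.
Proof. case: p => j k; rewrite /partner /=; by case: (v j); case: (ord4_cases k) => ->. Qed.

Lemma partner_neq p : partner p != p.
Proof.
case: p => j k; rewrite /partner /= xpair_eqE eqxx /=.
by case: (v j); case: (ord4_cases k) => ->.
Qed.

Lemma partner_inj : injective partner.
Proof. exact: can_inj partnerK. Qed.

Lemma pair_no_lose (A : {set board n}) :
  (forall p, p \in A -> partner p \notin A) -> ~~ [exists f in FF, f \subset A].
Proof.
move=> HA; apply/existsP => -[f /andP [Hf HfA]].
have Hf' : forall p, p \in f -> partner p \notin f.
  move=> p Hp; apply/negP=> Hq.
  by move: (HA p (subsetP HfA p Hp)); rewrite (subsetP HfA _ Hq).
move: Hf; rewrite /game_family !inE => /orP [|].
  case/existsP=> i /andP [Hfi /eqP H3].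
  have Hsub : f :|: partner @: f \subset box i.
    rewrite subUset Hfi /=; apply/subsetP=> q /imsetP [p Hp ->].
    by move: (subsetP Hfi p Hp); rewrite !boxE !inE.
  have := subset_leq_card Hsub; rewrite card_box cardsU card_imset; last exact: partner_inj.
  rewrite (_ : f :&: partner @: f = set0) ?cards0 ?H3 //.
  apply/eqP; rewrite -subset0; apply/subsetP=> q; rewrite in_setI => /andP [Hq /imsetP [p Hp Eq]].
  by move: (Hf' p Hp); rewrite -Eq Hq.
case/imsetP=> C HC EC.
have /hasP [l Hl Hlt] := allP Hv C HC.
have Hs : vtx_s l.1 \in f by rewrite EC !inE; apply/orP; left; apply: imset_f.
have Hn : vtx_lit (lit_neg l) \in f by rewrite EC !inE; apply/orP; right; apply: imset_f.
move: (Hf' _ Hs); rewrite (_ : partner (vtx_s l.1) = vtx_lit (lit_neg l)) ?Hn //.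
rewrite /partner /vtx_s /vtx_lit /lit_neg /=; move: Hlt; rewrite /lit_true => /eqP ->.
by case: l.2.
Qed.

Definition Pinv (A E : {set board n}) :=
  (forall p, (p \in A) = (partner p \in E)) /\ (forall p, p \in A -> p \notin E).

Lemma pair_win k : forall A E, #|~: (A :|: E)| = k -> Pinv A E -> win k A E true.
Proof.
elim/ltn_ind: k => k IH A E Hk [P1 P2].
case: k IH Hk => [|k] IH Hk /=.
  apply: pair_no_lose => p Hp; apply/negP=> Hq.
  by move: (P2 _ Hq); rewrite -P1 Hp.
apply/forallP=> x; apply/implyP=> Hx.
have Hx' := Hx; rewrite !inE negb_or in Hx'; case/andP: Hx' => HxA HxE.
have HpA : partner x \notin A by rewrite P1 partnerK.
have HpE : partner x \notin E by rewrite -P1.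
have Hpx : partner x != x by apply: partner_neq.
have Hfree : partner x \in ~: (A :|: (x |: E)) by rewrite !inE !negb_or HpA HpE Hpx.
have Hk' : #|~: (A :|: (x |: E))| = k by rewrite free_addE; apply: card_free_add.
case: k IH Hk Hk' Hfree => [|k] IH Hk Hk' Hfree.
  by move: Hfree; rewrite (cards0_eq Hk') inE.
apply/existsP; exists (partner x); rewrite Hfree /=.
apply: IH; first by [].
  by rewrite free_addA; apply: card_free_add.
split.
  move=> p; rewrite !inE P1; congr orb.
  apply/eqP/eqP => [->|<-]; by rewrite ?partnerK.
move=> p; rewrite !inE => /orP [/eqP ->|Hp]; first by rewrite negb_or Hpx HpE.
rewrite negb_or (P2 _ Hp) andbT; apply/eqP=> Epx; move: Hp; rewrite Epx.
by rewrite (negbTE HxA).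
Qed.

End Pair.

Section Phase.
Variable n : nat.
Variable phi : seq (clause n).
Local Notation FF := (game_family phi).
Local Notation win := (avoider_wins_from FF).
Local Notation Inv := (@Inv n).

Definition Aset m (b : 'I_n -> bool) :=
  [set p : board n | (p.1 < m) && ((p.2 == ord4_1) || (p.2 == code (b p.1)))].
Definition Eset m (b : 'I_n -> bool) :=
  [set p : board n | (p.1 < m) && ((p.2 == ord4_0) || (p.2 == code (~~ b p.1)))].
Definition upd (b : 'I_n -> bool) (i : 'I_n) c := fun j => if j == i then c else b j.

Lemma InvE k A E x : Inv k.+1 A E true -> x \in ~: (A :|: E) -> Inv k A (x |: E) false.
Proof.
case=> Hd Hk HE Hx; have Hx' := Hx; rewrite !inE negb_or in Hx'; case/andP: Hx' => HxA HxE.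
split.
- move=> p Hp; rewrite !inE negb_or (Hd p Hp) andbT.
  by apply/eqP=> Ep; move: Hp; rewrite Ep (negbTE HxA).
- by rewrite free_addE; apply: card_free_add.
- by rewrite cardsU1 HxE HE /=; lia.
Qed.

Lemma InvA k A E y : Inv k.+1 A E false -> y \in ~: (A :|: E) -> Inv k (y |: A) E true.
Proof.
case=> Hd Hk HE Hy; have Hy' := Hy; rewrite !inE negb_or in Hy'; case/andP: Hy' => HyA HyE.
split.
- move=> p; rewrite !inE => /orP [/eqP -> //|]; exact: Hd.
- by rewrite free_addA; apply: card_free_add.
- by rewrite cardsU1 HyA HE /=; lia.
Qed.

Lemma winE k A E x : win k.+1 A E true -> x \in ~: (A :|: E) -> win k A (x |: E) false.
Proof. by move=> /forallP /(_ x) /implyP H /H. Qed.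

Lemma winA k A E : win k.+1 A E false -> exists2 y, y \in ~: (A :|: E) & win k (y |: A) E true.
Proof. by case/existsP=> y /andP [H1 H2]; exists y. Qed.

Lemma Inv_pos k A E t x : Inv k A E t -> x \in ~: (A :|: E) -> exists k', k = k'.+1.
Proof.
case=> _ Hk _ Hx; case: k Hk => [|k] Hk; last by exists k.
by move: Hx; rewrite (cards0_eq Hk) inE.
Qed.

Lemma free_ins (A E : {set board n}) x y z :
  x \in ~: (A :|: E) -> x != y -> x != z -> x \in ~: ((y |: A) :|: (z |: E)).
Proof. by rewrite !inE !negb_or => /andP [-> ->] -> ->. Qed.

Lemma lose_step k A E a x w (i : 'I_n) : Inv k A E true -> win k A E true ->
  w \in ~: (A :|: E) -> uniq [:: a; x; w] -> a \in E -> x \in E ->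
  a \in box i -> x \in box i -> w \in box i -> False.
Proof.
move=> I W Hw Hu Ha Hx Hai Hxi Hwi.
have [k' Ek] := Inv_pos I Hw; subst k.
apply: (lose_E3 (i := i) (InvE I Hw) _ (winE W Hw)).
apply: (three_in Hu); rewrite in_setI ?Hai ?Hxi ?Hwi andbT in_setU1 ?Ha ?Hx ?eqxx ?orbT //.
Qed.

Lemma finish k A E a x2 r (i : 'I_n) : Inv k.+2 A E true -> win k.+2 A E true ->
  a \in E -> x2 \in ~: (A :|: E) -> r \in ~: (A :|: E) -> uniq [:: a; x2; r] ->
  a \in box i -> x2 \in box i -> r \in box i ->
  Inv k (r |: A) (x2 |: E) true /\ win k (r |: A) (x2 |: E) true.
Proof.
move=> I W Ha Hx Hr Hu Hai Hxi Hri.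
have I3 := InvE I Hx; have W3 := winE W Hx.
have [z Hz W4] := winA W3; have I4 := InvA I3 Hz.
case: (eqVneq z r) => [Ez|Hzr]; first by subst z.
exfalso; apply: (lose_step (a := a) (x := x2) (w := r) (i := i) I4 W4) => //.
- apply: free_ins => //; first by rewrite eq_sym.
  by move: Hu => /= /andP [_ /andP [H _]]; rewrite inE in H; rewrite eq_sym.
- by rewrite !inE Ha orbT.
- by rewrite !inE eqxx.
Qed.

Lemma Aset_step (i : 'I_n) b c :
  Aset i.+1 (upd b i c) = (i, ord4_1) |: ((i, code c) |: Aset i b).
Proof.
apply/setP=> [[j k]]; rewrite !inE /= !xpair_eqE /upd.
case: (eqVneq j i) => [->|Hji] /=.
  by rewrite ltnSn ltnn /=; case: (k == ord4_1); case: (k == code c).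
have Hn : (nat_of_ord j == nat_of_ord i) = false by apply: negbTE.
by rewrite ltnS leq_eqVlt Hn.
Qed.

Lemma Eset_step (i : 'I_n) b c :
  Eset i.+1 (upd b i c) = (i, code (~~ c)) |: ((i, ord4_0) |: Eset i b).
Proof.
apply/setP=> [[j k]]; rewrite !inE /= !xpair_eqE /upd.
case: (eqVneq j i) => [->|Hji] /=.
  by rewrite ltnSn ltnn /=; case: (k == ord4_0); case: (k == code (~~ c)).
have Hn : (nat_of_ord j == nat_of_ord i) = false by apply: negbTE.
by rewrite ltnS leq_eqVlt Hn.
Qed.

Lemma in_box (i : 'I_n) k : (i, k) \in box i.
Proof. by rewrite boxE inE. Qed.

Lemma phase (i : 'I_n) b k :
  Inv k.+4 (Aset i b) (Eset i b) true -> win k.+4 (Aset i b) (Eset i b) true ->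
  exists c, Inv k (Aset i.+1 (upd b i c)) (Eset i.+1 (upd b i c)) true /\
            win k (Aset i.+1 (upd b i c)) (Eset i.+1 (upd b i c)) true.
Proof.
move=> I0 W0.
have fr : forall k0, (i, k0) \in ~: (Aset i b :|: Eset i b).
  by move=> k0; rewrite !inE /= ltnn.
have I1 := InvE I0 (fr ord4_0); have W1 := winE W0 (fr ord4_0).
have [y Hy W2] := winA W1; have I2 := InvA I1 Hy.
have Ha : (i, ord4_0) \in (i, ord4_0) |: Eset i b by rewrite !inE eqxx.
have fr2 : forall k0, (i, k0) != y -> k0 != ord4_0 ->
    (i, k0) \in ~: ((y |: Aset i b) :|: ((i, ord4_0) |: Eset i b)).
  move=> k0 H1 H2; apply: free_ins => //; by rewrite xpair_eqE eqxx.
have Lcase : forall c, y = (i, code c) -> exists c, Inv k (Aset i.+1 (upd b i c)) (Eset i.+1 (upd b i c)) true /\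
            win k (Aset i.+1 (upd b i c)) (Eset i.+1 (upd b i c)) true.
  move=> c Ey; exists c; rewrite Aset_step Eset_step -Ey.
  apply: (finish (a := (i, ord4_0)) (i := i) I2 W2) => //; rewrite ?in_box //.
  - apply: fr2; last by clear Ey; case: c.
    by rewrite Ey xpair_eqE eqxx /=; clear Ey; case: c.
  - apply: fr2; last by [].
    by rewrite Ey xpair_eqE eqxx /=; clear Ey; case: c.
  - by clear Ey; case: c; rewrite /= !inE !xpair_eqE eqxx.
case: y Hy W2 I2 fr2 Lcase => j k0 Hy W2 I2 fr2 Lcase.
case: (eqVneq j i) => [Eji|Hji].
  subst j; case: (ord4_cases k0) => Ek; subst k0.
  - by move: Hy; rewrite in_setC in_setU in_setU1 eqxx orbT.
  - exists false; rewrite Aset_step Eset_step setUCA.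
    apply: (finish (a := (i, ord4_0)) (i := i) I2 W2) => //; rewrite ?in_box //.
    + by apply: fr2; rewrite // xpair_eqE eqxx.
    + by apply: fr2; rewrite // xpair_eqE eqxx.
    + by rewrite /= !inE !xpair_eqE eqxx.
  - exact: (Lcase true).
  - exact: (Lcase false).
exfalso.
have Hneq : forall k1 k2 : 'I_4, (i, k1) != (j, k2) 
  by move=> k1 k2; apply/eqP=> -[E1 _]; move: Hji; rewrite E1 eqxx.
have Hu : uniq [:: (i, ord4_0); (i, ord4_2); (i, ord4_3)] by rewrite /= !inE !xpair_eqE eqxx.
have [I4 W4] := finish I2 W2 Ha (fr2 ord4_2 (Hneq _ _) isT) (fr2 ord4_3 (Hneq _ _) isT) Hu
  (in_box _ _) (in_box _ _) (in_box _ _).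
apply: (lose_step (a := (i, ord4_0)) (x := (i, ord4_2)) (w := (i, ord4_1)) (i := i) I4 W4) => //; rewrite ?in_box //.
all: try by rewrite /= !inE !xpair_eqE eqxx.
all: try by rewrite !in_setU1 eqxx ?orbT.
apply: free_ins.
- exact: fr2 ord4_1 (Hneq _ _) isT.
- by rewrite xpair_eqE eqxx.
- by rewrite xpair_eqE eqxx.
Qed.

End Phase.

Section Final.
Variable n : nat.
Variable phi : seq (clause n).
Local Notation FF := (game_family phi).
Local Notation win := (avoider_wins_from FF).

Lemma reach m : m <= n -> win (n * 4) set0 set0 true ->
  exists b, Inv ((n - m) * 4) (Aset m b) (Eset m b) true /\
            win ((n - m) * 4) (Aset m b) (Eset m b) true.
Proof.
move=> + W; elim: m => [_|m IH Hm].
  exists (fun _ : 'I_n => true).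
  have -> : Aset 0 (fun _ : 'I_n => true) = set0 by apply/setP=> p; rewrite !inE.
  have -> : Eset 0 (fun _ : 'I_n => true) = set0 by apply/setP=> p; rewrite !inE.
  rewrite subn0; split=> //; split.
  - by move=> p; rewrite inE.
  - by rewrite setU0 setC0 cardsT card_board.
  - by rewrite cards0.
have [b [I0 W0]] := IH (ltnW Hm).
have E4 : (n - m) * 4 = ((n - m.+1) * 4).+4 by lia.
rewrite E4 in I0 W0.
have [c [I1 W1]] := @phase n phi (Ordinal Hm) b _ I0 W0.
by exists (upd b (Ordinal Hm) c).
Qed.

Lemma win_sat : avoider_wins_enforcer_first FF -> satisfiable phi.
Proof.
rewrite /avoider_wins_enforcer_first card_board => W.
have [b [_ Wn]] := reach (leqnn n) W.
rewrite subnn mul0n /= in Wn.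
exists b; apply/allP => C HC; apply/negPn/negP => Hn.
case/negP: Wn; apply/existsP; exists (clause_set C); apply/andP; split.
  by rewrite /game_family !inE; apply/orP; right; apply: imset_f.
apply/subsetP=> p; rewrite inE => /orP [] /imsetP [l Hl ->]; rewrite inE /= ltn_ord /=.
  by [].
have Hb : b l.1 = ~~ l.2.
  have : ~~ lit_true b l by apply: contra Hn => H; apply/hasP; exists l.
  by rewrite /lit_true; case: (b l.1); case: l.2.
by rewrite Hb /code; case: l.2; rewrite eqxx orbT.
Qed.

End Final.

Theorem mainTheorem2 (n : nat) (phi : seq (clause n)) :
  all (@clause_ok n) phi ->
  (avoider_wins_enforcer_first (game_family phi) <-> satisfiable phi).
Proof.
move=> _; split; first exact: win_sat.
case=> v Hv; rewrite /avoider_wins_enforcer_first.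
apply: (pair_win Hv); first by rewrite setU0 setC0 cardsT.
by split=> p; rewrite !inE.
Qed.
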